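(* Let $T$ be a continuous linear operator on a real or complex separable infinite-dimensional F-space $X$, and let $x$ be a recurrent vector of $T$. Then $x\in\mathrm{span}(\mathcal{E}(T))$ if and only if $\mathrm{span}\{T^nx:n\geq0\}$ is finite-dimensional. Consequently, for every Furstenberg family $\mathcal{F}$ with $\mathcal{F}\mathrm{Rec}(T)\setminus\mathrm{span}(\mathcal{E}(T))\neq\varnothing$, there exists an infinite-dimensional $T$-invariant vector subspace $Z\subset X$ with $Z^N\subset\mathcal{F}\mathrm{Rec}(T_{(N)})$ for every $N\in\mathbb{N}$.
   Context: $x$ is recurrent if $x\in\overline{\{T^nx:n\geq1\}}$. If $X$ is complex, $\mathcal{E}(T)=\{x\neq0: Tx=\lambda x \text{ for some } \lambda\in\mathbb{C},|\lambda|=1\}$ (unimodular eigenvectors). If $X$ is real, let $\widetilde X=\{x+iy:x,y\in X\}\cong X\oplus X$ with complex scalar multiplication $(\alpha+i\beta)(x+iy)=(\alpha x-\beta y)+i(\alpha y+\beta x)$ and $\widetilde T(x+iy)=Tx+iTy$; then $\mathcal{E}(T)=\{x\in X:\exists y\in X,\ x+iy\in\mathcal{E}(\widetilde T)\}$. A Furstenberg family is a collection $\mathcal{F}$ of infinite subsets of $\mathbb{N}_0$, closed under supersets, with $A\cap[n,\infty)\in\mathcal{F}$ whenever $A\in\mathcal{F}$, $n\in\mathbb{N}$. $\mathcal{F}\mathrm{Rec}(S)$ is the set of $y$ such that $\{n\geq0:S^ny\in U\}\in\mathcal{F}$ for every neighbourhood $U$ of $y$. $T_{(N)}=T\oplus\cdots\oplus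 T$ on $X^N$. *)

(* Defs.v *)
From HB Require Import structures.
From mathcomp Require Import all_boot all_order all_algebra.
From mathcomp Require Import all_classical all_reals all_analysis.
From mathcomp Require Export complex.
Set Implicit Arguments. Unset Strict Implicit. Unset Printing Implicit Defensive.
Import Order.TTheory GRing.Theory Num.Theory.
Local Open Scope classical_set_scope.
Local Open Scope ring_scope.

Definition spanS (K : numDomainType) (X : lmodType K) (A : set X) : set X :=
  [set x | exists (n : nat) (c : 'I_n -> K) (v : 'I_n -> X),
      (forall i, A (v i)) /\ x = \sum_(i < n) c i *: v i].

Definition finite_dim (K : numDomainType) (X : lmodType K) (V : set X) : Prop :=
  exists (n : nat) (v : 'I_n -> X), V `<=` spanS (range v).

Definition subspace (K : numDomainType) (X : lmodType K) (Z : set X) : Prop :=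
  Z 0 /\ (forall x y, Z x -> Z y -> Z (x + y)) /\
  (forall (a : K) x, Z x -> Z (a *: x)).

Definition Fspace (R : realType) (K : numFieldType) (X : topologicalLmodType K)
  : Prop :=
  exists d : X -> X -> R,
    (forall x y, 0 <= d x y) /\ (forall x y, d x y = 0 <-> x = y) /\
    (forall x y, d x y = d y x) /\
    (forall x y z, d x z <= d x y + d y z) /\
    (forall x y z, d (x + z) (y + z) = d x y) /\
    (forall (x : X) (A : set X),
        nbhs x A <-> exists2 e : R, 0 < e & [set y | d x y < e] `<=` A) /\
    (forall u : nat -> X,
        (forall e : R, 0 < e -> exists N : nat, forall m n : nat,
            (N <= m)%N -> (N <= n)%N -> d (u m) (u n) < e) ->
        exists l : X, u @ \oo --> l).

Definition separable (T : topologicalType) : Prop :=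
  exists D : set T, countable D /\ dense D.

Definition recurrent (T : topologicalType) (f : T -> T) (x : T) : Prop :=
  closure (range (fun n : nat => iter n.+1 f x)) x.

Definition furstenberg (F : set (set nat)) : Prop :=
  (forall A, F A -> infinite_set A) /\
  (forall A B, F A -> A `<=` B -> F B) /\
  (forall A (n : nat), F A -> (0 < n)%N -> F (A `&` [set k | (n <= k)%N])).

Definition FRec (T : topologicalType) (F : set (set nat)) (f : T -> T) : set T :=
  [set y | forall U, nbhs y U -> F [set n | U (iter n f y)]].

Definition opN (X : topologicalType) (N : nat) (f : X -> X) :
  {ptws 'I_N -> X} -> {ptws 'I_N -> X} :=
  fun z => fun i => f (z i).
Arguments opN {X} N f.

Definition EigC (K : numFieldType) (X : lmodType K) (T : X -> X) : set X :=
  [set x | x != 0 /\ exists l : K, `|l| = 1 /\ T x = l *: x].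

(** Unimodular eigenvectors, real case, via the complexification
    X~ = X (+) iX, T~(x+iy) = Tx + iTy, (a+ib)(x+iy) = (ax-by) + i(ay+bx):
    x in E(T) iff exists y, x+iy <> 0 and T~(x+iy) = (a+ib)(x+iy), a^2+b^2=1. *)
Definition EigR (R : realType) (X : lmodType R) (T : X -> X) : set X :=
  [set x | exists (y : X) (a b : R),
      a ^+ 2 + b ^+ 2 = 1 /\ (x != 0 \/ y != 0) /\
      T x = a *: x - b *: y /\ T y = a *: y + b *: x].

Definition thm15_conclusion (K : numFieldType) (X : topologicalLmodType K)
  (T : X -> X) (E : set X) : Prop :=
  (forall x : X, recurrent T x ->
     (spanS E x <-> finite_dim (spanS (range (fun n : nat => iter n T x))))) /\
  (forall F : set (set nat), furstenberg F ->
     FRec F T `\` spanS E !=set0 ->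
     exists Z : set X, subspace Z /\ T @` Z `<=` Z /\ ~ finite_dim Z /\
       forall N : nat, (0 < N)%N ->
         [set z : {ptws 'I_N -> X} | forall i, Z (z i)] `<=` FRec F (opN N T)).

(* Main.v *)
Require Import Defs.
From HB Require Import structures.
From mathcomp Require Import all_boot all_order all_algebra.
From mathcomp Require Import all_classical all_reals all_analysis.
From mathcomp Require Import complex.
Import Order.TTheory GRing.Theory Num.Theory.
Import numFieldTopology.Exports numFieldNormedType.Exports.
Local Open Scope classical_set_scope.
Local Open Scope ring_scope.
Set Implicit Arguments. Unset Strict Implicit. Unset Printing Implicit Defensive.
From mathcomp Require Import ring zify.
Section TVS.
Variables (K : numFieldType) (X : topologicalLmodType K).

Lemma scale_cvg (T : Type) (F : set_system T) (FF : Filter F)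
  (mu : T -> K) (z : T -> X) (m : K) (z0 : X) :
  mu @ F --> m -> z @ F --> z0 -> (fun t => mu t *: z t) @ F --> m *: z0.
Proof.
move=> hm hz.
have hc := @scale_continuous K X ((m : K^o), z0).
apply: (cvg_comp (fun t => ((mu t : K^o), z t)) _ _ hc).
exact: (@cvg_pair _ _ _ F (nbhs (m : K^o)) (nbhs z0) _ _ _ _ _ hm hz).
Qed.

Lemma add_cvg (T : Type) (F : set_system T) (FF : Filter F)
  (f g : T -> X) (a b : X) :
  f @ F --> a -> g @ F --> b -> (fun t => f t + g t) @ F --> a + b.
Proof.
move=> ha hb.
have hc := @add_continuous X (a, b).
apply: (cvg_comp (fun t => (f t, g t)) _ _ hc).
exact: cvg_pair.
Qed.

Lemma opp_cvg (T : Type) (F : set_system T) (FF : Filter F)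
  (f : T -> X) (a : X) :
  f @ F --> a -> (fun t => - f t) @ F --> - a.
Proof.
move=> ha.
have hc := @opp_continuous X a.
exact: (cvg_comp f _ ha hc).
Qed.

Lemma sub_cvg (T : Type) (F : set_system T) (FF : Filter F)
  (f g : T -> X) (a b : X) :
  f @ F --> a -> g @ F --> b -> (fun t => f t - g t) @ F --> a - b.
Proof. by move=> ha hb; apply: add_cvg => //; apply: opp_cvg. Qed.

Lemma scale_bdd_cvg0 (T : Type) (F : set_system T) (FF : Filter F)
  (mu : T -> K) (z : T -> X) :
  (forall t, `|mu t| <= 1) -> z @ F --> 0 -> (fun t => mu t *: z t) @ F --> 0.
Proof.
move=> hb hz W hW.
have hc : (fun z : K^o * X => z.1 *: z.2) @ nbhs ((0:K^o), (0:X)) --> (0 : X).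
  have := @scale_continuous K X ((0 : K^o), 0).
  move=> h; rewrite /continuous_at /= in h.
  have e : (0 : K^o) *: (0 : X) = 0 by exact: scale0r.
  by rewrite e in h.
have := hc W hW.
case=> /= -[A B] /= [hA hB] hAB.
move: hA => /nbhs_ballP [e e0 heA].
pose c : K := 2 / e.
have c0 : c != 0 by rewrite /c mulf_neq0 // ?invr_eq0 ?pnatr_eq0 // gt_eqF.
have hz' : (fun t => c *: z t) @ F --> 0.
  rewrite -(scaler0 _ c); apply: scale_cvg => //; exact: cvg_cst.
have hB' : F [set t | B (c *: z t)] := hz' B hB.
suff : F [set t | W (mu t *: z t)] by [].
apply: filterS hB' => t /= hBt.
have -> : mu t *: z t = (mu t / c) *: (c *: z t).
  by rewrite scalerA mulrVK ?unitfE.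
apply: (hAB (mu t / c, c *: z t)); split => //=.
apply: heA.
rewrite /ball /= sub0r normrN normrM normfV /c normrM normfV.
rewrite (@ger0_norm _ 2) // (@gtr0_norm _ e) //.
rewrite invfM invrK.
have h1 : `|mu t| * (e / 2) <= e / 2.
  by rewrite ler_piMl // divr_ge0 // ltW.
rewrite (mulrC 2^-1); apply: (le_lt_trans h1).
rewrite ltr_pdivrMr // ltr_pMr //.
by rewrite ltr1n.
Qed.

End TVS.

Lemma ptws_cvg (X : topologicalType) (N : nat) (T : Type) (F : set_system T)
  (FF : Filter F) (f : T -> {ptws 'I_N -> X}) (g : {ptws 'I_N -> X}) :
  (forall i, (fun t => f t i) @ F --> g i) -> f @ F --> g.
Proof.
move=> h.
apply/cvg_sup => i A /=.
move=> [B [[C Cop CB] Bg BA]].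
have : nbhs (g i) C.
  apply: open_nbhs_nbhs; split => //.
  by move: Bg; rewrite -CB.
move=> /h hC.
suff : F (f @^-1` A) by [].
have hC' : F ((fun t => f t i) @^-1` C) by [].
apply: filterS hC' => t /= Ct.
by apply: BA; rewrite -CB.
Qed.

Section TVS2.
Variables (K : numFieldType) (X : topologicalLmodType K).

Lemma sum_cvg (T : Type) (F : set_system T) (FF : Filter F) (n : nat)
  (f : 'I_n -> T -> X) (l : 'I_n -> X) :
  (forall i, f i @ F --> l i) ->
  (fun t => \sum_(i < n) f i t) @ F --> \sum_(i < n) l i.
Proof.
elim: n f l => [|n IH] f l h.
  rewrite big_ord0; under eq_fun do rewrite big_ord0; exact: cvg_cst.
rewrite big_ord_recr /=; under eq_fun do rewrite big_ord_recr /=.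
apply: add_cvg; last exact: h.
by apply: (IH (fun i => f (widen_ord (leqnSn n) i))) => i; exact: h.
Qed.

End TVS2.
Section Papply.
Variables (K : numFieldType) (X : lmodType K) (T : {linear X -> X}).
Implicit Types (p q : {poly K}) (x y : X).

Definition papply (p : {poly K}) (x : X) : X :=
  \sum_(i < size p) p`_i *: iter i T x.

Lemma papplyE n (p : {poly K}) (x : X) : (size p <= n)%N ->
  papply p x = \sum_(i < n) p`_i *: iter i T x.
Proof.
move=> hn; rewrite /papply (big_ord_widen n (fun i => p`_i *: iter i T x) hn).
rewrite big_mkcond /=; apply: eq_bigr => i _; case: ifP => // /negbT.
by rewrite -leqNgt => h; rewrite nth_default // scale0r.
Qed.

Lemma iter_lin n (a : K) (x y : X) :
  iter n T (a *: x + y) = a *: iter n T x + iter n T y.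
Proof. by elim: n => [|n IH] //=; rewrite IH linearP. Qed.

Lemma iter0v n : iter n T 0 = 0.
Proof. by elim: n => [|n IH] //=; rewrite IH linear0. Qed.

Lemma papply0 x : papply 0 x = 0.
Proof. by rewrite /papply size_poly0 big_ord0. Qed.

Lemma papplyD p q x : papply (p + q) x = papply p x + papply q x.
Proof.
pose n := (size p + size q)%N.
rewrite !(papplyE (n := n)) ?leq_addr ?leq_addl //; last first.
  apply: (leq_trans (size_polyD _ _)); rewrite geq_max leq_addr leq_addl //.
rewrite -big_split /=; apply: eq_bigr => i _.
by rewrite coefD scalerDl.
Qed.

Lemma papplyZ c p x : papply (c *: p) x = c *: papply p x.
Proof.
rewrite !(papplyE (n := size p)) ?size_scale_leq // scaler_sumr.
by apply: eq_bigr => i _; rewrite coefZ scalerA.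
Qed.

Lemma papplyN p x : papply (- p) x = - papply p x.
Proof. by rewrite -(scaleN1r p) papplyZ scaleN1r. Qed.

Lemma papplyC c x : papply c%:P x = c *: x.
Proof.
rewrite (papplyE (n := 1)) ?size_polyC_leq1 // big_ord1 coefC /=.
by [].
Qed.

Lemma papply_lin p a x y : papply p (a *: x + y) = a *: papply p x + papply p y.
Proof.
rewrite /papply scaler_sumr -big_split /=; apply: eq_bigr => i _.
by rewrite iter_lin scalerDr !scalerA mulrC.
Qed.

Lemma papply0x p : papply p 0 = 0.
Proof. by rewrite /papply big1 // => i _; rewrite iter0v scaler0. Qed.

Lemma papplyT p x : T (papply p x) = papply p (T x).
Proof.
rewrite /papply linear_sum; apply: eq_bigr => i _.
by rewrite linearZ /= -iterS iterSr.
Qed.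

Lemma papplyMX p x : papply (p * 'X) x = papply p (T x).
Proof.
rewrite (papplyE (n := (size p).+1)); last first.
  apply: (leq_trans (size_polyMleq _ _)); rewrite size_polyX addn2 //.
rewrite big_ord_recl coefMX eqxx scale0r add0r /papply.
by apply: eq_bigr => i _; rewrite coefMX /= add0n -iterS iterSr.
Qed.

Lemma papplyXM p x : papply ('X * p) x = T (papply p x).
Proof. by rewrite mulrC papplyMX papplyT. Qed.

Lemma papplyM p q x : papply (p * q) x = papply p (papply q x).
Proof.
elim/poly_ind: p q x => [|p c IH] q x.
  by rewrite mul0r !papply0.
by rewrite mulrDl -mulrA !papplyD IH papplyXM mul_polyC papplyZ papplyMX papplyC.
Qed.

Lemma papplyXnM n p x : papply ('X^n * p) x = iter n T (papply p x).
Proof.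
elim: n => [|n IH]; first by rewrite expr0 mul1r.
by rewrite exprS -mulrA papplyXM IH.
Qed.

Lemma papply1 x : papply 1 x = x.
Proof. by rewrite -[1]/(1%:P) papplyC scale1r. Qed.

Lemma papply_iter n p x : papply p (iter n T x) = iter n T (papply p x).
Proof.
by rewrite -papplyXnM mulrC papplyM -{1}[x]papply1 -papplyXnM mulr1.
Qed.

End Papply.

Section PapplyCont.
Variables (K : numFieldType) (X : topologicalLmodType K) (T : {linear X -> X}).
Hypothesis Tc : continuous T.

Lemma iter_cvg (S : Type) (F : set_system S) (FF : Filter F) n (z : S -> X) z0 :
  z @ F --> z0 -> (fun t => iter n T (z t)) @ F --> iter n T z0.
Proof.
elim: n => [|n IH] //= hz.
have h1 := IH hz. have h2 := @Tc (iter n T z0). exact: (cvg_comp _ _ h1 h2).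
Qed.

Lemma papply_cvg (S : Type) (F : set_system S) (FF : Filter F) p (z : S -> X) z0 :
  z @ F --> z0 -> (fun t => papply T p (z t)) @ F --> papply T p z0.
Proof.
move=> hz; rewrite /papply.
apply: (@sum_cvg _ _ _ _ _ _ (fun i t => p`_i *: iter i T (z t))) => i.
apply: scale_cvg; first exact: cvg_cst.
exact: iter_cvg.
Qed.

End PapplyCont.
Import ComplexField.Normc.
Section NormcLemmas.
Local Open Scope complex_scope.
Variable R : realType.
Local Notation C := R[i].

Lemma normc_ge0 (z : C) : 0 <= normc z.
Proof. by case: z => a b /=; exact: sqrtr_ge0. Qed.

Lemma normcX (z : C) n : normc (z ^+ n) = normc z ^+ n.
Proof.
elim: n => [|n IH]; first by rewrite !expr0 normc1.
by rewrite !exprS normcM IH.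
Qed.

Lemma normc_real (r : R) : normc (r%:C) = `|r|.
Proof. by rewrite /= expr0n /= addr0 sqrtr_sqr. Qed.

Lemma normc_nat n : normc (n%:R : C) = n%:R.
Proof.
by rewrite -(rmorph_nat (real_complex R)) normc_real ger0_norm.
Qed.

Lemma normcE (z : C) : `|z| = (normc z)%:C.
Proof. by case: z => a b; rewrite normc_def. Qed.

Lemma normc_eq0 (z : C) : (normc z == 0) = (z == 0).
Proof.
apply/eqP/eqP => [/eq0_normc //|->]; exact: normc0.
Qed.

End NormcLemmas.

Lemma oo_filter (T' : topologicalType) (G : set_system nat) (FG : Filter G)
  (hG : forall m, G [set n | (m <= n)%N]) (f : nat -> T') (l : T') :
  f @ \oo --> l -> f @ G --> l.
Proof.
move=> h A hA.
have [m _ hm] := h A hA.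
exact: (filterS hm (hG m)).
Qed.

Section Abstract.
Variable R : realType.
Local Notation C := R[i].
Variable Y : PreTopologicalZmodule.type.
Variable sc : C -> Y -> Y.
Hypothesis scDl : forall a b y, sc (a + b) y = sc a y + sc b y.
Hypothesis scDr : forall a y z, sc a (y + z) = sc a y + sc a z.
Hypothesis scA : forall a b y, sc a (sc b y) = sc (a * b) y.
Hypothesis sc1 : forall y, sc 1 y = y.
Hypothesis Yuniq : forall (F : set_system nat), ProperFilter F ->
  forall (f : nat -> Y) (a b : Y), f @ F --> a -> f @ F --> b -> a = b.
Hypothesis Yadd : forall (F : set_system nat), Filter F ->
  forall (f g : nat -> Y) (a b : Y), f @ F --> a -> g @ F --> b ->
  (fun n => f n + g n) @ F --> a + b.
Hypothesis Yopp : forall (F : set_system nat), Filter F ->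
  forall (f : nat -> Y) (a : Y), f @ F --> a -> (fun n => - f n) @ F --> - a.
Hypothesis YL1 : forall (F : set_system nat), Filter F ->
  forall (mu : nat -> C) (z : nat -> Y) (z0 : Y),
  (fun n => normc (mu n)) @ F --> (0:R) -> z @ F --> z0 ->
  (fun n => sc (mu n) (z n)) @ F --> 0.
Hypothesis YL2 : forall (F : set_system nat), Filter F ->
  forall (mu : nat -> C) (z : nat -> Y),
  (forall n, normc (mu n) <= 1) -> z @ F --> 0 ->
  (fun n => sc (mu n) (z n)) @ F --> 0.
Variable G : set_system nat.
Hypothesis PG : ProperFilter G.
Hypothesis hG : forall m, G [set n | (m <= n)%N].

Lemma sc0 y : sc 0 y = 0.
Proof. by apply: (@addrI _ (sc 0 y)); rewrite -scDl !addr0. Qed.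

Lemma scr0 a : sc a 0 = 0.
Proof. by apply: (@addrI _ (sc a 0)); rewrite -scDr !addr0. Qed.

Lemma scN a y : sc (- a) y = - sc a y.
Proof. by apply: (@addrI _ (sc a y)); rewrite -scDl !subrr sc0. Qed.

Lemma unimod (w : Y) (lam : C) : w != 0 ->
  (fun n => sc (lam ^+ n) w) @ G --> w -> normc lam = 1.
Proof.
move=> w0 hw.
case: (ltrgtP (normc lam) 1) => // h.
  have h0 : (fun n => sc (lam ^+ n) w) @ G --> 0.
    apply: (@YL1 G _ (fun n => lam ^+ n) (fun _ => w) w); last exact: cvg_cst.
    have -> : (fun n => normc (lam ^+ n)) = (fun n => normc lam ^+ n).
      by apply: funext => n; rewrite normcX.
    apply: oo_filter => //; apply: cvg_expr.
    by rewrite ger0_norm // normc_ge0.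
  by move: w0; rewrite (Yuniq PG hw h0) eqxx.
have lam0 : lam != 0.
  apply/eqP => l0; move: h; rewrite l0 normc0 ltNge ler01 //.
have e : forall n, sc (lam^-1 ^+ n) (sc (lam ^+ n) w) = w.
  by move=> n; rewrite scA -exprMn mulVf // expr1n sc1.
have h0 : (fun n => sc (lam^-1 ^+ n) (sc (lam ^+ n) w)) @ G --> 0.
  apply: (@YL1 G _ (fun n => lam^-1 ^+ n) (fun n => sc (lam ^+ n) w) w) => //.
  have -> : (fun n => normc (lam^-1 ^+ n)) = (fun n => (normc lam)^-1 ^+ n).
    by apply: funext => n; rewrite normcX normcV.
  apply: oo_filter => //; apply: cvg_expr.
  rewrite ger0_norm ?invr_ge0 ?normc_ge0 // invf_lt1 //.
  exact: lt_trans h.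
have ew : (fun n => sc (lam^-1 ^+ n) (sc (lam ^+ n) w)) = (fun=> w).
  by apply: funext => n; rewrite e.
rewrite ew in h0.
have hc : (fun _ : nat => w) @ G --> w by exact: cvg_cst.
by move: w0; rewrite (Yuniq PG hc h0) eqxx.
Qed.

Lemma nomult (u v : Y) (lam : C) : v != 0 -> normc lam = 1 ->
  (fun n => sc (lam ^+ n) u + sc (n%:R * lam ^+ n) v) @ G --> u -> False.
Proof.
move=> v0 nl hy.
pose a := fun n : nat => ((n.+1)%:R : C)^-1.
have na : (fun n => normc (a n)) @ G --> (0:R).
  apply: oo_filter => //.
  have -> : (fun n => normc (a n)) = (fun n => (n.+1%:R)^-1).
    by apply: funext => n; rewrite /a normcV normc_nat.
  exact: cvg_harmonic.
have nla : forall n, normc (lam ^+ n) <= 1 by move=> n; rewrite normcX nl expr1n.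
have lam0 : lam != 0.
  by apply/eqP => l0; move: nl; rewrite l0 normc0 => /eqP; rewrite eq_sym oner_eq0.
have e1 : forall n, sc (lam ^+ n) v =
   sc (a n) (sc (lam ^+ n) u + sc (n%:R * lam ^+ n) v)
   - sc (lam ^+ n) (sc (a n) u) + sc (lam ^+ n) (sc (a n) v).
  move=> n; rewrite scDr !scA (mulrC (lam ^+ n) (a n)).
  rewrite [sc (a n * lam ^+ n) u + _]addrC addrK -scDl.
  congr (sc _ v); rewrite /a.
  have hn : (n.+1%:R : C) != 0 by rewrite pnatr_eq0.
  rewrite -natr1; field.
  by rewrite natr1.
have h1 : (fun n => sc (lam ^+ n) v) @ G --> 0.
  have -> : (fun n => sc (lam ^+ n) v) = (fun n =>
   sc (a n) (sc (lam ^+ n) u + sc (n%:R * lam ^+ n) v)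
   - sc (lam ^+ n) (sc (a n) u) + sc (lam ^+ n) (sc (a n) v)).
    by apply: funext => n; rewrite -e1.
  rewrite -[0 : Y]addr0 -[X in X + _]subr0.
  apply: Yadd => //; last first.
    apply: YL2 => //.
    apply: (@YL1 G _ a (fun _ => v) v) => //; exact: cvg_cst.
  apply: Yadd => //.
    apply: (@YL1 G _ a _ u) => //.
  apply: Yopp => //.
  apply: YL2 => //.
  apply: (@YL1 G _ a (fun _ => u) u) => //; exact: cvg_cst.
have h2 : (fun n => sc (lam^-1 ^+ n) (sc (lam ^+ n) v)) @ G --> 0.
  apply: YL2 => // n; rewrite normcX normcV nl invr1 expr1n //.
have e2 : forall n, sc (lam^-1 ^+ n) (sc (lam ^+ n) v) = v.
  by move=> n; rewrite scA -exprMn mulVf // expr1n sc1.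
have ew : (fun n => sc (lam^-1 ^+ n) (sc (lam ^+ n) v)) = (fun=> v).
  by apply: funext => n; rewrite e2.
rewrite ew in h2.
have hc : (fun _ : nat => v) @ G --> v by exact: cvg_cst.
by move: v0; rewrite (Yuniq PG hc h2) eqxx.
Qed.


Lemma taylor2 (l : C) m : l != 0 -> exists s : {poly C},
  'X^m = (l ^+ m)%:P + (m%:R * l ^+ m * l^-1)%:P * ('X - l%:P)
         + s * ('X - l%:P) ^+ 2.
Proof.
move=> l0; elim: m => [|m [s IH]].
  by exists 0; rewrite !expr0 !mul0r !addr0.
exists ((m%:R * l ^+ m * l^-1)%:P + s * 'X).
have e1 : (l ^+ m.+1)%:P = (l ^+ m)%:P * l%:P by rewrite exprSr polyCM.
have e2 : (m.+1%:R * l ^+ m.+1 * l^-1)%:P =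
          (m%:R * l ^+ m * l^-1)%:P * l%:P + (l ^+ m)%:P.
  rewrite -polyCM -polyCD; congr (_%:P).
  by rewrite exprSr -natr1; field.
rewrite e1 e2 exprSr IH.
set A := (l ^+ m)%:P; set B := (m%:R * l ^+ m * l^-1)%:P; set L := l%:P.
ring.
Qed.

Variable n : nat.
Variable lam : 'I_n -> C.
Definition Pi := \prod_(k < n) ('X - (lam k)%:P).
Variable E : {poly C} -> Y.
Hypothesis E_D : forall p q, E (p + q) = E p + E q.
Hypothesis E_Z : forall c p, E (c *: p) = sc c (E p).
Hypothesis E_Pi : forall s, E (s * Pi) = 0.
Hypothesis E_min : forall r, r != 0 -> E r = 0 -> (size Pi <= size r)%N.
Hypothesis E_rec : forall r, (fun m => E ('X^m * r)) @ G --> E r.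

Lemma E0 : E 0 = 0.
Proof. by rewrite -(scale0r (0 : {poly C})) E_Z sc0. Qed.

Lemma E_sum (I : finType) (P : pred I) (F : I -> {poly C}) :
  E (\sum_(i | P i) F i) = \sum_(i | P i) E (F i).
Proof. exact: (big_morph E E_D E0). Qed.

Lemma Pi_neq0 : Pi != 0.
Proof.
apply: monic_neq0; apply: monic_prod => i _; exact: monicXsubC.
Qed.

Lemma size_XsubCM (c : C) r : r != 0 ->
  size (('X - c%:P) * r) = (size r).+1.
Proof.
move=> r0; rewrite size_mul ?polyXsubC_eq0 // size_XsubC //.
Qed.

Lemma E_eig q (l : C) : Pi = ('X - l%:P) * q ->
  forall m, E ('X^m * q) = sc (l ^+ m) (E q).
Proof.
move=> hPi m.
have := subrXX 'X (l%:P) m; set h := \sum_(i < m) _ => e.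
have -> : 'X^m = (l ^+ m)%:P + ('X - l%:P) * h.
  by rewrite -e rmorphXn /= addrC subrK.
rewrite mulrDl mul_polyC E_D E_Z -mulrA mulrC -mulrA (mulrC q) -hPi.
by rewrite E_Pi addr0.
Qed.

Lemma E_nonzero q (l : C) : Pi = ('X - l%:P) * q -> E q != 0.
Proof.
move=> hPi.
have q0 : q != 0.
  by apply/eqP => q0; move: Pi_neq0; rewrite hPi q0 mulr0 eqxx.
apply/eqP => Eq0.
have := E_min q0 Eq0; rewrite hPi size_XsubCM //.
by rewrite ltnn.
Qed.

Definition qf (j : 'I_n) := \prod_(k < n | k != j) ('X - (lam k)%:P).

Lemma Pi_qf j : Pi = ('X - (lam j)%:P) * qf j.
Proof. by rewrite /Pi (bigD1 j) //. Qed.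

Lemma roots_unimod k : normc (lam k) = 1.
Proof.
apply: (@unimod (E (qf k))); first exact: (E_nonzero (Pi_qf k)).
have := @E_rec (qf k).
have -> // : (fun m => E ('X^m * qf k)) = (fun m => sc (lam k ^+ m) (E (qf k))).
by apply: funext => m; rewrite (E_eig (Pi_qf k)).
Qed.

Lemma lam_inj : injective lam.
Proof.
move=> i j eij; apply/eqP; apply/negP => /negP nij.
pose q := \prod_(k < n | (k != i) && (k != j)) ('X - (lam k)%:P).
set l := lam i.
pose D := 'X - l%:P.
pose r := D * q.
have hPi : Pi = D * r.
  rewrite /Pi (bigD1 i) // (bigD1 j) /=; last by rewrite eq_sym.
  by rewrite /r /D /q /l eij mulrA.
have l0 : l != 0.
  apply/eqP => l0; have := roots_unimod i; rewrite -/l l0 normc0 => /eqP.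
  by rewrite eq_sym oner_eq0.
have v00 : E r != 0 by exact: (E_nonzero hPi).
set v := sc l^-1 (E r).
have v0 : v != 0.
  apply: contra v00 => /eqP v0; apply/eqP.
  by rewrite -[E r]sc1 -(mulfV l0) -scA -/v v0 scr0.
apply: (@nomult (E q) v l v0 (roots_unimod i)).
have := @E_rec q.
have -> // : (fun m => E ('X^m * q)) =
   (fun m => sc (l ^+ m) (E q) + sc (m%:R * l ^+ m) v).
apply: funext => m.
have [s hs] := taylor2 m l0.
rewrite hs !mulrDl !mul_polyC !E_D !E_Z.
have -> : s * D ^+ 2 * q = s * Pi by rewrite hPi /r expr2 !mulrA.
rewrite E_Pi addr0 /v scA -mulrA.
by rewrite -scalerAl E_Z.
Qed.

Lemma decomp : exists (c : 'I_n -> C) (w : 'I_n -> Y),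
  E 1 = \sum_(j < n) sc (c j) (w j) /\
  forall j, w j != 0 /\ normc (lam j) = 1 /\
    exists q, w j = E q /\ E ('X * q) = sc (lam j) (w j).
Proof.
pose c j := ((qf j).[lam j])^-1.
exists c, (fun j => E (qf j)); split; last first.
  move=> j; split; first exact: (E_nonzero (Pi_qf j)).
  split; first exact: roots_unimod.
  exists (qf j); split => //.
  have := E_eig (Pi_qf j) 1; by rewrite expr1 expr1.
have [n0|npos] := posnP n.
  have hPi1 : Pi = 1.
    by apply: big1 => k _; have := ltn_ord k; rewrite {2}n0.
  have -> : E 1 = 0 by rewrite -(mul1r 1) -{2}hPi1 E_Pi.
  by rewrite big1 // => k; have := ltn_ord k; rewrite {2}n0.
have hq : forall j k, j != k -> (qf j).[lam k] = 0.
  move=> j k jk; rewrite /qf horner_prod (bigD1 k) 1?eq_sym //=.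
  by rewrite hornerXsubC subrr mul0r.
have hqn : forall j, (qf j).[lam j] != 0.
  move=> j; rewrite /qf horner_prod; apply/prodf_neq0 => i ij.
  rewrite hornerXsubC subr_eq0; apply: contra ij => /eqP e.
  by apply/eqP; apply: lam_inj.
have sPi : size Pi = n.+1.
  rewrite /Pi size_prod; last by move=> i _; rewrite polyXsubC_eq0.
  rewrite (eq_bigr (fun=> 2%N)); last by move=> i _; rewrite size_XsubC.
  rewrite sum_nat_const card_ord.
  lia.
have sq : forall j, (size (qf j) <= n)%N.
  move=> j; have := sPi; rewrite (Pi_qf j) size_XsubCM.
    by move=> [] ->.
  by apply/eqP => q0; move: Pi_neq0; rewrite (Pi_qf j) q0 mulr0 eqxx.
pose P := 1 - \sum_(j < n) c j *: qf j.
have hP : forall k, P.[lam k] = 0.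
  move=> k; rewrite /P hornerD hornerN horner_sum hornerC.
  rewrite (bigD1 k) //= big1; last first.
    by move=> j jk; rewrite hornerZ hq ?mulr0.
  by rewrite hornerZ mulVf ?hqn // addr0 subrr.
have sP : (size P <= n)%N.
  apply: (leq_trans (size_polyD _ _)); rewrite geq_max size_poly1 npos size_polyN /=.
  apply: (big_ind (fun p : {poly C} => (size p <= n)%N)).
  - by rewrite size_poly0.
  - by move=> p q hp hq'; apply: (leq_trans (size_polyD _ _)); rewrite geq_max hp hq'.
  - by move=> j _; apply: (leq_trans (size_scale_leq _ _)); exact: sq.
have P0 : P = 0.
  apply/eqP; apply/negP => /negP Pn0.
  have := @max_poly_roots _ P [seq lam k | k <- enum 'I_n] Pn0.
  rewrite size_map size_enum_ord.
  have -> : all (root P) [seq lam k | k <- enum 'I_n].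
    by apply/allP => z /mapP [k _ ->]; rewrite /root hP.
  rewrite map_inj_uniq ?enum_uniq //; last exact: lam_inj.
  move=> /(_ isT isT) h; move: (leq_trans h sP); by rewrite ltnn.
have e1 : 1 = \sum_(j < n) c j *: qf j by apply/eqP; rewrite -subr_eq0 -/P P0.
rewrite e1 E_sum; apply: eq_bigr => j _; by rewrite E_Z.
Qed.

End Abstract.
Section Spans.
Variables (K : numFieldType) (X : lmodType K).

Lemma spanS_in (A : set X) x : A x -> spanS A x.
Proof.
move=> Ax; exists 1%N, (fun=> 1), (fun=> x); split => //.
by rewrite big_ord1 scale1r.
Qed.

Lemma spanS_subspace (A : set X) : Defs.subspace (spanS A).
Proof.
rewrite /Defs.subspace. split.
  exists 0%N, (fun=> 0), (fun=> 0); split; first by move=> [].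
  by rewrite big_ord0.
split.
  move=> x y [n1 [c1 [v1 [h1 ->]]]] [n2 [c2 [v2 [h2 ->]]]].
  exists (n1 + n2)%N.
  exists (fun i => match fintype.split i with inl j => c1 j | inr k => c2 k end).
  exists (fun i => match fintype.split i with inl j => v1 j | inr k => v2 k end).
  split.
    by move=> i; case: (fintype.split i) => j.
  rewrite big_split_ord /=; congr (_ + _); apply: eq_bigr => i _.
    by rewrite -[lshift _ _]/(unsplit (inl i)) unsplitK.
  by rewrite -[rshift _ _]/(unsplit (inr i)) unsplitK.
move=> a x [n [c [v [h ->]]]].
exists n, (fun i => a * c i), v; split => //.
by rewrite scaler_sumr; apply: eq_bigr => i _; rewrite scalerA.
Qed.

Lemma subspace_sum (Z : set X) (I : finType) (P : pred I) (F : I -> X) :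
  Defs.subspace Z -> (forall i, P i -> Z (F i)) -> Z (\sum_(i | P i) F i).
Proof.
move=> [Z0 [ZD ZZ]] hF.
by apply: (big_ind Z) => //.
Qed.

Lemma spanS_sub (A Z : set X) : Defs.subspace Z -> A `<=` Z -> spanS A `<=` Z.
Proof.
move=> hZ AZ x [n [c [v [h ->]]]].
apply: subspace_sum => // i _.
case: hZ => _ [_ ZZ]; apply: ZZ; exact: AZ.
Qed.

Lemma spanS_mono (A B : set X) : A `<=` spanS B -> spanS A `<=` spanS B.
Proof. by move=> AB; apply: spanS_sub => //; exact: spanS_subspace. Qed.

Lemma span_range_coef m (v : 'I_m -> X) y : spanS (range v) y ->
  exists a : 'I_m -> K, y = \sum_(k < m) a k *: v k.
Proof.
case=> n [c [w [hw ->]]].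
have [g hg] : {g : 'I_n -> 'I_m & forall i, v (g i) = w i}.
  apply: (@choice _ _ (fun i k => v k = w i)) => i; case: (hw i) => k _ e; by exists k.
exists (fun k => \sum_(i < n | g i == k) c i).
rewrite (partition_big g xpredT) //=.
apply: eq_bigr => k _; rewrite scaler_suml; apply: eq_bigr => i /eqP <-.
by rewrite hg.
Qed.

End Spans.

Section MinPoly.
Variables (K : numFieldType) (X : lmodType K) (T : {linear X -> X}).

Lemma exists_annih x : finite_dim (spanS (range (fun n => iter n T x))) ->
  exists p : {poly K}, p != 0 /\ papply T p x = 0.
Proof.
case=> m [v hv].
have hrep : forall j : 'I_m.+1, exists a : 'I_m -> K,
    iter j T x = \sum_(k < m) a k *: v k.
  move=> j; apply: span_range_coef; apply: hv; apply: spanS_in.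
  by exists (nat_of_ord j).
have [af haf] := choice hrep.
pose A : 'M[K]_(m.+1, m) := \matrix_(j, k) af j k.
have nfree : ~~ row_free A.
  apply/negP => /eqP h; have := rank_leq_col A; rewrite h ltnn //.
have : ~ (forall u : 'rV_m.+1, u *m A = 0 -> u = 0).
  by move=> h; move: nfree; rewrite inj_row_free.
move=> /existsNP [u] /not_implyP [uA u0].
pose p : {poly K} := \poly_(j < m.+1) u 0 (inord j).
exists p; split.
  apply/eqP => p0; apply: u0; apply/rowP => j.
  have := congr1 (fun q : {poly K} => q`_j) p0.
  by rewrite coef_poly ltn_ord inord_val coef0 mxE => ->.
rewrite (@papplyE _ _ T m.+1) ?size_poly //.
have -> : \sum_(i < m.+1) p`_i *: iter i T x =
          \sum_(i < m.+1) u 0 i *: \sum_(k < m) af i k *: v k.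
  by apply: eq_bigr => i _; rewrite coef_poly ltn_ord inord_val haf.
under eq_bigr do rewrite scaler_sumr.
rewrite exchange_big /=; apply: big1 => k _.
have := congr1 (fun M : 'rV[K]_m => M 0 k) uA; rewrite !mxE => hk.
rewrite (eq_bigr (fun i => (u 0 i * af i k) *: v k)); last first.
  by move=> i _; rewrite scalerA.
rewrite -scaler_suml.
suff -> : \sum_(i < m.+1) u 0 i * af i k = 0 by rewrite scale0r.
by rewrite -[RHS]hk; apply: eq_bigr => i _; rewrite mxE.
Qed.

Lemma exists_minpoly x : finite_dim (spanS (range (fun n => iter n T x))) ->
  exists p : {poly K}, [/\ p != 0, papply T p x = 0 &
    forall q, q != 0 -> papply T q x = 0 -> (size p <= size q)%N].
Proof.
move=> /exists_annih [p0 [p00 hp0]].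
suff : forall k, (exists p : {poly K}, [/\ p != 0, papply T p x = 0 & (size p <= k)%N]) ->
  exists p : {poly K}, [/\ p != 0, papply T p x = 0 &
    forall q, q != 0 -> papply T q x = 0 -> (size p <= size q)%N].
  by apply; exists p0; split.
elim=> [|k IH] [p [pn0 hp sp]].
  by move: pn0; rewrite -size_poly_eq0 -leqn0 sp.
case: (pselect (exists q : {poly K}, [/\ q != 0, papply T q x = 0 & (size q <= k)%N])).
  exact: IH.
move=> hn; exists p; split => // q qn0 hq.
apply: (leq_trans sp); rewrite ltnNge; apply/negP => hq'.
by apply: hn; exists q; split.
Qed.

End MinPoly.
Section FspaceLemmas.
Variables (R : realType) (K : numFieldType) (X : topologicalLmodType K).
Hypothesis hF : Fspace R X.

Lemma Fs_T1 (x y : X) : y != x -> exists U, nbhs x U /\ ~ U y.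
Proof.
case: hF => d [d0 [deq [dsym [dtri [dtr [dnb _]]]]]] yx.
have dxy : 0 < d x y.
  rewrite lt_def d0 andbT; apply/eqP => /deq e.
  by move: yx; rewrite e eqxx.
exists [set z | d x z < d x y]; split; last by rewrite /= ltxx.
by apply/dnb; exists (d x y).
Qed.

Lemma Fs_haus : hausdorff_space X.
Proof.
move=> p q hc; apply/eqP; apply/negP => /negP pq.
case: hF => d [d0 [deq [dsym [dtri [dtr [dnb _]]]]]].
have dpq : 0 < d p q.
  rewrite lt_def d0 andbT; apply/eqP => /deq e.
  by move: pq; rewrite e eqxx.
have e0 : 0 < d p q / 2 by rewrite divr_gt0.
have hA : nbhs p [set z | d p z < d p q / 2] by apply/dnb; exists (d p q / 2).
have hB : nbhs q [set z | d q z < d p q / 2] by apply/dnb; exists (d p q / 2).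
have [z [/= h1 h2]] := hc _ _ hA hB.
have := dtri p z q; rewrite (dsym z q).
have : d p z + d q z < d p q / 2 + d p q / 2 by rewrite ltrD.
rewrite -splitr => h3 h4.
by move: (le_lt_trans h4 h3); rewrite ltxx.
Qed.

End FspaceLemmas.

Section RecFilter.
Variables (X : topologicalType) (f : X -> X) (x : X).
Hypothesis T1 : forall y, y != x -> exists U, nbhs x U /\ ~ U y.
Hypothesis hrec : recurrent f x.

Lemma rec_inf (U : set X) : nbhs x U -> forall m, exists n, (m <= n)%N /\ U (iter n f x).
Proof.
case: (pselect (exists k, (0 < k)%N /\ iter k f x = x)) => [[k [k0 hk]]|nper].
  move=> hU m; exists (k * m)%N; split; first by rewrite leq_pmull.
  have -> : iter (k * m) f x = x.
    elim: m => [|m IH]; first by rewrite muln0.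
    by rewrite mulnS iterD IH hk.
  exact: nbhs_singleton.
suff key : forall m U, nbhs x U -> exists n, [/\ (m <= n)%N, (0 < n)%N & U (iter n f x)].
  by move=> hU m; have [n [h1 _ h3]] := key m U hU; exists n.
elim => [|m IH] V hV.
  have [y [[k _ <-] Vy]] := hrec hV.
  by exists k.+1; split.
have [m0|mpos] := posnP m.
  have [n [h1 h2 h3]] := IH V hV.
  by exists n; split => //; rewrite m0.
have ny : iter m f x != x.
  by apply/eqP => e; apply: nper; exists m.
have [W [hW nW]] := T1 ny.
have [n [h1 h2 [h3 h4]]] := IH (V `&` W) (filterI hV hW).
exists n; split => //.
rewrite ltn_neqAle h1 andbT; apply/eqP => e.
by apply: nW; rewrite e.
Qed.

Definition recG : set_system nat :=
  filter_from [set p : set X * nat | nbhs x p.1]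
    (fun p => [set n | (p.2 <= n)%N /\ p.1 (iter n f x)]).

Lemma recG_filter : Filter recG.
Proof.
apply: filter_from_filter.
  by exists (setT, 0%N); exact: filterT.
move=> [A a] [B b] /= hA hB.
exists (A `&` B, maxn a b); first exact: filterI.
move=> n /= [hn [hAn hBn]].
by rewrite geq_max in hn; case/andP: hn => ha hb.
Qed.

Lemma recG_proper : ProperFilter recG.
Proof.
apply: filter_from_proper; first exact: recG_filter.
move=> [A a] /= hA.
have [n [hn hAn]] := rec_inf hA a.
by exists n.
Qed.

Lemma recG_ge m : recG [set n | (m <= n)%N].
Proof. by exists (setT, m) => //=; [exact: filterT | move=> n []]. Qed.

Lemma recG_cvg : (fun n => iter n f x) @ recG --> x.
Proof.
move=> A hA; exists (A, 0%N) => //=.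
by move=> n [_ h].
Qed.

End RecFilter.

Lemma FRec_recurrent (X : topologicalType) (F : set (set nat)) (f : X -> X) y :
  furstenberg F -> FRec F f y -> recurrent f y.
Proof.
move=> [Finf _] hy U hU.
have hFU := hy U hU.
have := Finf _ hFU.
case: (pselect (exists n, (0 < n)%N /\ U (iter n f y))) => [[n [n0 hn]]|hn] hinf.
  exists (iter n f y); split => //.
  by exists n.-1 => //; rewrite prednK.
exfalso; apply: hinf.
apply: (sub_finite_set (B := [set 0%N])); last exact: finite_set1.
move=> n /= hUn; apply/eqP; rewrite -leqn0 leqNgt; apply/negP => n0.
by apply: hn; exists n.
Qed.
Section ComplexCase.
Variable R : realType.
Local Notation C := R[i].
Local Open Scope complex_scope.

Lemma C_cvg0 (F : set_system nat) (FF : Filter F) (mu : nat -> C) :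
  (fun n => normc (mu n)) @ F --> (0:R) -> (mu : nat -> C^o) @ F --> (0 : C^o).
Proof.
move=> h; apply/cvgr0Pnorm_lt => eps eps0.
have he : (0 < complex.Re eps)%R /\ complex.Im eps = 0.
  by move: eps0; rewrite ltcE => /andP [/eqP h1 h2]; split.
have hh := cvgr0_norm_lt (fun n => normc (mu n)) h (complex.Re eps) he.1.
near=> t.
have ht : `|normc (mu t)| < complex.Re eps by near: t; exact: hh.
rewrite normcE ltcE /= he.2 eqxx /=.
by rewrite ger0_norm ?normc_ge0 in ht.
Unshelve. all: by end_near.
Qed.

Lemma Pi_nth (rs : seq C) :
  Pi (fun k : 'I_(size rs) => rs`_k) = \prod_(z <- rs) ('X - z%:P).
Proof. by rewrite /Pi (big_nth 0) big_mkord. Qed.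

Variable X : topologicalLmodType C.
Variable T : {linear X -> X}.
Hypothesis Tc : continuous T.
Hypothesis hF : Fspace R X.

Lemma complex_conv (x : X) : recurrent T x ->
  finite_dim (spanS (range (fun n => iter n T x))) -> spanS (EigC T) x.
Proof.
move=> hrec hfd.
have [p [p0 hp pmin]] := exists_minpoly hfd.
have [rs hrs] := closed_field_poly_normal p.
set lam := fun k : 'I_(size rs) => rs`_k.
have lead0 : lead_coef p != 0 by rewrite lead_coef_eq0.
have hPi : Pi lam = (lead_coef p)^-1 *: p.
  by rewrite /lam Pi_nth {2}hrs scalerA mulVf // scale1r.
have sPi : size (Pi lam) = size p by rewrite hPi size_scale ?invr_eq0.
have PG := recG_proper (@Fs_T1 _ _ _ hF x) hrec.
have hG := @recG_ge _ (fun y => T y) x.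
have YL1c : forall (F : set_system nat), Filter F ->
  forall (mu : nat -> C) (z : nat -> X) (z0 : X),
  (fun n => normc (mu n)) @ F --> (0:R) -> z @ F --> z0 ->
  (fun n => mu n *: z n) @ F --> 0.
  move=> F FF mu z z0 hmu hz.
  rewrite -(scale0r z0); apply: scale_cvg => //.
  exact: C_cvg0.
have YL2c : forall (F : set_system nat), Filter F ->
  forall (mu : nat -> C) (z : nat -> X),
  (forall n, normc (mu n) <= 1) -> z @ F --> 0 ->
  (fun n => mu n *: z n) @ F --> 0.
  move=> F FF mu z hmu hz.
  apply: scale_bdd_cvg0 => // n.
  by rewrite normcE -[1 : C]/(1%:C) lecR.
have EPi : forall s, papply T (s * Pi lam) x = 0.
  by move=> s; rewrite papplyM hPi papplyZ hp scaler0 papply0x.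
have Emin : forall r, r != 0 -> papply T r x = 0 -> (size (Pi lam) <= size r)%N.
  by move=> r r0 hr; rewrite sPi; exact: pmin.
have Erec : forall r, (fun m => papply T ('X^m * r) x) @ recG (fun y => T y) x --> papply T r x.
  move=> r.
  have -> : (fun m => papply T ('X^m * r) x) = (fun m => papply T r (iter m T x)).
    by apply: funext => m; rewrite papplyXnM papply_iter.
  apply: papply_cvg => //.
  exact: recG_cvg.
have [c [w [hx hw]]] := @decomp R X (fun a y => a *: y)
  (fun a b y => scalerDl y a b) (fun a y z => scalerDr a y z)
  (fun a b y => scalerA a b y) (fun y => scale1r y)
  (fun F PF f a b ha hb => @cvg_unique _ (Fs_haus hF) _ (fmap_proper_filter f PF) a b ha hb)
  (fun F FF f g a b ha hb => add_cvg FF ha hb)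
  (fun F FF f a ha => opp_cvg FF ha)
  YL1c YL2c _ PG hG (size rs) lam (fun r => papply T r x)
  (fun p q => papplyD T p q x) (fun c p => papplyZ T c p x) EPi Emin Erec.
have -> : x = \sum_(j < size rs) c j *: w j by rewrite -hx papply1.
exists (size rs), c, w; split => // j.
have [wj0 [nl [q [eq hq]]]] := hw j.
split; first by [].
exists (lam j); split.
  by rewrite normcE nl.
by rewrite eq -papplyXM -eq.
Qed.

End ComplexCase.
Section RealCase.
Variable R : realType.
Local Notation C := R[i].
Local Open Scope complex_scope.
Local Notation Re := complex.Re.
Local Notation Im := complex.Im.

Lemma ReD (a b : C) : Re (a + b) = Re a + Re b. Proof. by case: a; case: b. Qed.
Lemma ImD (a b : C) : Im (a + b) = Im a + Im b. Proof. by case: a; case: b. Qed.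
Lemma ReM (a b : C) : Re (a * b) = Re a * Re b - Im a * Im b.
Proof. by case: a; case: b. Qed.
Lemma ImM (a b : C) : Im (a * b) = Re a * Im b + Im a * Re b.
Proof. by case: a => a1 a2; case: b => b1 b2 /=; rewrite addrC. Qed.
Lemma Re0 : Re (0 : C) = 0. Proof. by []. Qed.
Lemma Im0 : Im (0 : C) = 0. Proof. by []. Qed.
Lemma Re1 : Re (1 : C) = 1. Proof. by []. Qed.
Lemma Im1 : Im (1 : C) = 0. Proof. by []. Qed.
Lemma ReR (r : R) : Re (r%:C) = r. Proof. by []. Qed.
Lemma ImR (r : R) : Im (r%:C) = 0. Proof. by []. Qed.

Lemma Re_sum (I : Type) (s : seq I) (P : pred I) (F : I -> C) :
  Re (\sum_(i <- s | P i) F i) = \sum_(i <- s | P i) Re (F i).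
Proof. by elim/big_rec2: _ => // i a b _ <-; rewrite ReD. Qed.
Lemma Im_sum (I : Type) (s : seq I) (P : pred I) (F : I -> C) :
  Im (\sum_(i <- s | P i) F i) = \sum_(i <- s | P i) Im (F i).
Proof. by elim/big_rec2: _ => // i a b _ <-; rewrite ImD. Qed.

Lemma normc_sqr (z : C) : normc z = 1 -> Re z ^+ 2 + Im z ^+ 2 = 1.
Proof.
case: z => a b /= h.
have := sqr_sqrtr (addr_ge0 (sqr_ge0 a) (sqr_ge0 b)).
by rewrite h expr1n.
Qed.

Lemma absRe_le (z : C) : `|Re z| <= normc z.
Proof.
case: z => a b /=; rewrite -sqrtr_sqr; apply: ler_wsqrtr.
by rewrite lerDl sqr_ge0.
Qed.

Lemma absIm_le (z : C) : `|Im z| <= normc z.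
Proof.
case: z => a b /=; rewrite -sqrtr_sqr; apply: ler_wsqrtr.
by rewrite lerDr sqr_ge0.
Qed.

Definition ReP (r : {poly C}) : {poly R} := \poly_(i < size r) Re r`_i.
Definition ImP (r : {poly C}) : {poly R} := \poly_(i < size r) Im r`_i.

Lemma coef_ReP r i : (ReP r)`_i = Re r`_i.
Proof.
rewrite coef_poly; case: ltnP => // h.
by rewrite nth_default.
Qed.
Lemma coef_ImP r i : (ImP r)`_i = Im r`_i.
Proof.
rewrite coef_poly; case: ltnP => // h.
by rewrite nth_default.
Qed.

Lemma ReP_D p q : ReP (p + q) = ReP p + ReP q.
Proof. by apply/polyP => i; rewrite coefD !coef_ReP coefD ReD. Qed.
Lemma ImP_D p q : ImP (p + q) = ImP p + ImP q.
Proof. by apply/polyP => i; rewrite coefD !coef_ImP coefD ImD. Qed.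
Lemma ReP_Z c p : ReP (c *: p) = Re c *: ReP p - Im c *: ImP p.
Proof.
apply/polyP => i; rewrite coefB !coefZ coef_ReP coef_ImP coef_ReP coefZ.
by rewrite ReM.
Qed.
Lemma ImP_Z c p : ImP (c *: p) = Re c *: ImP p + Im c *: ReP p.
Proof.
apply/polyP => i; rewrite coefD !coefZ coef_ReP coef_ImP coef_ImP coefZ.
by rewrite ImM.
Qed.
Lemma ReP_XnM n r : ReP ('X^n * r) = 'X^n * ReP r.
Proof.
apply/polyP => i; rewrite coef_ReP !coefXnM; case: ltnP => //.
by rewrite coef_ReP.
Qed.
Lemma ImP_XnM n r : ImP ('X^n * r) = 'X^n * ImP r.
Proof.
apply/polyP => i; rewrite coef_ImP !coefXnM; case: ltnP => //.
by rewrite coef_ImP.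
Qed.
Lemma ReP1 : ReP 1 = 1.
Proof. by apply/polyP => i; rewrite coef_ReP !coef1; case: (i == 0%N). Qed.
Lemma ImP1 : ImP 1 = 0.
Proof. by apply/polyP => i; rewrite coef_ImP coef1 coef0; case: (i == 0%N). Qed.

Lemma ReP_Mreal s (q : {poly R}) :
  ReP (s * map_poly (real_complex R) q) = ReP s * q.
Proof.
apply/polyP => i; rewrite coef_ReP !coefM Re_sum; apply: eq_bigr => j _.
by rewrite coef_map /= ReM ImR mulr0 subr0 coef_ReP.
Qed.
Lemma ImP_Mreal s (q : {poly R}) :
  ImP (s * map_poly (real_complex R) q) = ImP s * q.
Proof.
apply/polyP => i; rewrite coef_ImP !coefM Im_sum; apply: eq_bigr => j _.
by rewrite coef_map /= ImM ImR mulr0 add0r coef_ImP.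
Qed.

Lemma ReP_ImP0 r : ReP r = 0 -> ImP r = 0 -> r = 0.
Proof.
move=> h1 h2; apply/polyP => i.
have := congr1 (fun p : {poly R} => p`_i) h1; have := congr1 (fun p : {poly R} => p`_i) h2.
rewrite coef_ReP coef_ImP !coef0.
by case: (r`_i) => a b /= -> ->.
Qed.

End RealCase.
HB.saturate prod.

Section RealPair.
Variable R : realType.
Local Notation C := R[i].
Local Open Scope complex_scope.
Local Notation Re := complex.Re.
Local Notation Im := complex.Im.
Variable X : topologicalLmodType R.

Definition scR (mu : C) (y : X * X) : X * X :=
  (Re mu *: y.1 - Im mu *: y.2, Re mu *: y.2 + Im mu *: y.1).


Lemma pair_cvg (F : set_system nat) (FF : Filter F) (f : nat -> X * X) (a : X * X) :
  (fun n => (f n).1) @ F --> a.1 -> (fun n => (f n).2) @ F --> a.2 -> f @ F --> a.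
Proof.
move=> h1 h2.
have -> : f = (fun n => ((f n).1, (f n).2)) by apply: funext => n; case: (f n).
case: a h1 h2 => a1 a2 /= h1 h2.
exact: (@cvg_pair _ _ _ F (nbhs a1) (nbhs a2) _ _ _ _ _ h1 h2).
Qed.

Lemma cvg_pair1 (F : set_system nat) (FF : Filter F) (f : nat -> X * X) (a : X * X) :
  f @ F --> a -> (fun n => (f n).1) @ F --> a.1.
Proof.
move=> h; case: a h => a1 a2 h.
exact: (cvg_comp _ _ h cvg_fst).
Qed.

Lemma cvg_pair2 (F : set_system nat) (FF : Filter F) (f : nat -> X * X) (a : X * X) :
  f @ F --> a -> (fun n => (f n).2) @ F --> a.2.
Proof.
move=> h; case: a h => a1 a2 h.
exact: (cvg_comp _ _ h cvg_snd).
Qed.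

Lemma scR_Dl a b y : scR (a + b) y = scR a y + scR b y.
Proof.
case: y => y1 y2; rewrite /scR /= ReD ImD !scalerDl.
by congr pair; rewrite ?opprD addrACA.
Qed.

Lemma scR_Dr a y z : scR a (y + z) = scR a y + scR a z.
Proof.
case: y => y1 y2; case: z => z1 z2; rewrite /scR /= !scalerDr.
by congr pair; rewrite ?opprD addrACA.
Qed.

Lemma scR_lc (mu : C) (y1 y2 : X) (a b c d : R) :
  scR mu (a *: y1 + b *: y2, c *: y1 + d *: y2) =
  ((Re mu * a - Im mu * c) *: y1 + (Re mu * b - Im mu * d) *: y2,
   (Re mu * c + Im mu * a) *: y1 + (Re mu * d + Im mu * b) *: y2).
Proof.
rewrite /scR /= !scalerDr !scalerA !scalerBl !scalerDl.
by congr pair; rewrite ?opprD addrACA.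
Qed.

Lemma scR_A a b y : scR a (scR b y) = scR (a * b) y.
Proof.
case: y => y1 y2.
have -> : (y1, y2) = (1 *: y1 + 0 *: y2, 0 *: y1 + 1 *: y2).
  by rewrite !scale1r !scale0r addr0 add0r.
rewrite !scR_lc ReM ImM.
congr pair; congr (_ *: _ + _ *: _); ring.
Qed.

Lemma scR_1 y : scR 1 y = y.
Proof.
by case: y => y1 y2; rewrite /scR /= !scale1r !scale0r subr0 addr0.
Qed.

Lemma R_squeeze (F : set_system nat) (FF : Filter F) (f g : nat -> R) :
  (forall n, `|f n| <= g n) -> g @ F --> (0:R) -> f @ F --> (0:R).
Proof.
move=> hfg hg; apply/cvgr0Pnorm_lt => e e0.
have hh := cvgr0_norm_lt g hg e e0.
near=> t.
have ht : `|g t| < e by near: t; exact: hh.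
apply: (le_lt_trans (hfg t)); apply: (le_lt_trans _ ht); exact: ler_norm.
Unshelve. all: by end_near.
Qed.

End RealPair.
Section RealConv.
Variable R : realType.
Local Notation C := R[i].
Local Open Scope complex_scope.
Local Notation Re := complex.Re.
Local Notation Im := complex.Im.
Variable X : topologicalLmodType R.
Variable T : {linear X -> X}.
Hypothesis Tc : continuous T.
Hypothesis hF : Fspace R X.

Lemma pair_uniq (F : set_system nat) (PF : ProperFilter F) (f : nat -> X * X)
  (a b : X * X) : f @ F --> a -> f @ F --> b -> a = b.
Proof.
move=> ha hb.
have FF : Filter F by exact: PF.
have e1 := @cvg_unique _ (Fs_haus hF) _ (fmap_proper_filter (fun n => (f n).1) PF) _ _
  (cvg_pair1 FF ha) (cvg_pair1 FF hb).
have e2 := @cvg_unique _ (Fs_haus hF) _ (fmap_proper_filter (fun n => (f n).2) PF) _ _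
  (cvg_pair2 FF ha) (cvg_pair2 FF hb).
by case: a b ha hb e1 e2 => a1 a2 [b1 b2] /= _ _ -> ->.
Qed.

Lemma pair_neq0 (w : X * X) : w != 0 -> w.1 != 0 \/ w.2 != 0.
Proof.
case: w => a b /= h.
case: (eqVneq a 0) => [a0|]; last by left.
right; apply: contra h => /eqP b0; apply/eqP.
by rewrite a0 b0.
Qed.

Lemma fst_sum n (F : 'I_n -> X * X) : (\sum_(j < n) F j).1 = \sum_(j < n) (F j).1.
Proof. by elim/big_rec2: _ => // i a b _ <-. Qed.

Lemma real_conv (x : X) : recurrent T x ->
  finite_dim (spanS (range (fun n => iter n T x))) -> spanS (EigR T) x.
Proof.
move=> hrec hfd.
have [p [p0 hp pmin]] := exists_minpoly hfd.
set pC := map_poly (real_complex R) p.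
have [rs hrs] := closed_field_poly_normal pC.
set lam := fun k : 'I_(size rs) => rs`_k.
have lead0 : lead_coef p != 0 by rewrite lead_coef_eq0.
have pC0 : pC != 0 by rewrite map_poly_eq0.
have hlead : lead_coef pC = (lead_coef p)%:C by rewrite lead_coef_map.
set pr := (lead_coef p)^-1 *: p.
have hPi : Pi lam = map_poly (real_complex R) pr.
  have hPi' : \prod_(z <- rs) ('X - z%:P) = (lead_coef pC)^-1 *: pC.
    by rewrite {2}hrs scalerA mulVf ?scale1r // lead_coef_eq0.
  rewrite /lam Pi_nth hPi' hlead /pr map_polyZ fmorphV //.
have hpr : papply T pr x = 0 by rewrite papplyZ hp scaler0.
have sPi : size (Pi lam) = size p by rewrite hPi size_map_poly size_scale ?invr_eq0.
have PG := recG_proper (@Fs_T1 _ _ _ hF x) hrec.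
have hG := @recG_ge _ (fun y => T y) x.
pose E := fun r : {poly C} => (papply T (ReP r) x, papply T (ImP r) x).
have YL1c : forall (F : set_system nat), Filter F ->
  forall (mu : nat -> C) (z : nat -> X * X) (z0 : X * X),
  (fun n => normc (mu n)) @ F --> (0:R) -> z @ F --> z0 ->
  (fun n => scR (mu n) (z n)) @ F --> 0.
  move=> F FF mu z z0 hmu hz.
  have hre : (fun n => Re (mu n)) @ F --> (0:R).
    exact: (R_squeeze FF (fun n => absRe_le (mu n)) hmu).
  have him : (fun n => Im (mu n)) @ F --> (0:R).
    exact: (R_squeeze FF (fun n => absIm_le (mu n)) hmu).
  have a1 := scale_cvg FF hre (cvg_pair1 FF hz).
  have a2 := scale_cvg FF hre (cvg_pair2 FF hz).
  have b1 := scale_cvg FF him (cvg_pair1 FF hz).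
  have b2 := scale_cvg FF him (cvg_pair2 FF hz).
  rewrite scale0r in a1; rewrite scale0r in a2.
  rewrite scale0r in b1; rewrite scale0r in b2.
  apply: pair_cvg => /=.
    by have := sub_cvg FF a1 b2; rewrite subr0.
  by have := add_cvg FF a2 b1; rewrite addr0.
have YL2c : forall (F : set_system nat), Filter F ->
  forall (mu : nat -> C) (z : nat -> X * X),
  (forall n, normc (mu n) <= 1) -> z @ F --> 0 ->
  (fun n => scR (mu n) (z n)) @ F --> 0.
  move=> F FF mu z hmu hz.
  have hre : forall n, `|Re (mu n)| <= 1.
    by move=> n; apply: le_trans (absRe_le _) (hmu n).
  have him : forall n, `|Im (mu n)| <= 1.
    by move=> n; apply: le_trans (absIm_le _) (hmu n).
  have a1 := scale_bdd_cvg0 FF hre (cvg_pair1 FF hz).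
  have a2 := scale_bdd_cvg0 FF hre (cvg_pair2 FF hz).
  have b1 := scale_bdd_cvg0 FF him (cvg_pair1 FF hz).
  have b2 := scale_bdd_cvg0 FF him (cvg_pair2 FF hz).
  apply: pair_cvg => /=.
    by have := sub_cvg FF a1 b2; rewrite subr0.
  by have := add_cvg FF a2 b1; rewrite addr0.
have Yadd : forall (F : set_system nat), Filter F ->
  forall (f g : nat -> X * X) (a b : X * X), f @ F --> a -> g @ F --> b ->
  (fun n => f n + g n) @ F --> a + b.
  move=> F FF f g a b ha hb; apply: pair_cvg => /=.
    exact: (add_cvg FF (cvg_pair1 FF ha) (cvg_pair1 FF hb)).
  exact: (add_cvg FF (cvg_pair2 FF ha) (cvg_pair2 FF hb)).
have Yopp : forall (F : set_system nat), Filter F ->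
  forall (f : nat -> X * X) (a : X * X), f @ F --> a -> (fun n => - f n) @ F --> - a.
  move=> F FF f a ha; apply: pair_cvg => /=.
    exact: (opp_cvg FF (cvg_pair1 FF ha)).
  exact: (opp_cvg FF (cvg_pair2 FF ha)).
have ED : forall p q, E (p + q) = E p + E q.
  by move=> p1 q1; rewrite /E ReP_D ImP_D !papplyD.
have EZ : forall c p, E (c *: p) = scR c (E p).
  by move=> c p1; rewrite /E /scR /= ReP_Z ImP_Z papplyD papplyN !papplyZ papplyD !papplyZ.
have EPi : forall s, E (s * Pi lam) = 0.
  by move=> s; rewrite /E hPi ReP_Mreal ImP_Mreal !papplyM hpr !papply0x.
have Emin : forall r, r != 0 -> E r = 0 -> (size (Pi lam) <= size r)%N.
  move=> r r0 hE; rewrite sPi.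
  have h1 := congr1 fst hE; have h2 := congr1 snd hE; simpl in h1, h2.
  case: (eqVneq (ReP r) 0) => [Re0|Rn0].
    have In0 : ImP r != 0.
      by apply: contra r0 => /eqP Im0; apply/eqP; exact: ReP_ImP0.
    apply: (leq_trans (pmin _ In0 h2)); exact: size_poly.
  apply: (leq_trans (pmin _ Rn0 h1)); exact: size_poly.
have Erec : forall r, (fun m => E ('X^m * r)) @ recG (fun y => T y) x --> E r.
  move=> r; apply: pair_cvg => /=.
    have -> : (fun m => papply T (ReP ('X^m * r)) x) = (fun m => papply T (ReP r) (iter m T x)).
      by apply: funext => m; rewrite ReP_XnM papplyXnM papply_iter.
    apply: papply_cvg => //; exact: recG_cvg.
  have -> : (fun m => papply T (ImP ('X^m * r)) x) = (fun m => papply T (ImP r) (iter m T x)).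
    by apply: funext => m; rewrite ImP_XnM papplyXnM papply_iter.
  apply: papply_cvg => //; exact: recG_cvg.
have [c [w [hx hw]]] := @decomp R (X * X)%type (@scR R X)
  (@scR_Dl R X) (@scR_Dr R X) (@scR_A R X) (@scR_1 R X)
  pair_uniq Yadd Yopp YL1c YL2c _ PG hG (size rs) lam E ED EZ EPi Emin Erec.
have ex : x = \sum_(j < size rs) (Re (c j) *: (w j).1 - Im (c j) *: (w j).2).
  have := congr1 fst hx; rewrite /E /= ReP1 papply1 => ->.
  by rewrite fst_sum.
have [S0 [SD SZ]] := spanS_subspace (EigR T).
rewrite ex; apply: subspace_sum; first exact: spanS_subspace.
move=> j _.
have [wj0 [nl [q [wq hq]]]] := hw j.
have hT1 : T (w j).1 = Re (lam j) *: (w j).1 - Im (lam j) *: (w j).2.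
  have := congr1 fst hq; rewrite /E /= -[X in ReP (X * q)]expr1 ReP_XnM expr1 papplyXM.
  by rewrite wq.
have hT2 : T (w j).2 = Re (lam j) *: (w j).2 + Im (lam j) *: (w j).1.
  have := congr1 snd hq; rewrite /E /= -[X in ImP (X * q)]expr1 ImP_XnM expr1 papplyXM.
  by rewrite wq.
have hs := normc_sqr nl.
have E1 : EigR T (w j).1.
  exists (w j).2, (Re (lam j)), (Im (lam j)); split => //; split.
    exact: pair_neq0.
  by split.
have E2 : EigR T (w j).2.
  exists (- (w j).1), (Re (lam j)), (Im (lam j)); split => //; split.
    by rewrite oppr_eq0; case: (pair_neq0 wj0) => h; [right|left].
  split; first by rewrite hT2 scalerN opprK.
  by rewrite linearN hT1 opprB scalerN addrC.
apply: SD; first by apply: SZ; exact: spanS_in.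
rewrite -scaleNr; apply: SZ; exact: spanS_in.
Qed.

End RealConv.
Section Forward.
Variables (K : numFieldType) (X : lmodType K) (T : {linear X -> X}).

Lemma T_span m (u : 'I_m -> X) : (forall i, spanS (range u) (T (u i))) ->
  forall y, spanS (range u) y -> spanS (range u) (T y).
Proof.
move=> hu y [n [c [w [hw ->]]]].
rewrite linear_sum; apply: subspace_sum; first exact: spanS_subspace.
move=> i _; rewrite linearZ.
have [_ [_ SZ]] := spanS_subspace (range u).
apply: SZ; case: (hw i) => k _ <-; exact: hu.
Qed.

Lemma fd_of_inv m (u : 'I_m -> X) x : (forall i, spanS (range u) (T (u i))) ->
  spanS (range u) x -> finite_dim (spanS (range (fun n => iter n T x))).
Proof.
move=> hu hx; exists m, u.
apply: spanS_sub; first exact: spanS_subspace.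
move=> y [n _ <-]; elim: n => [|n IH] //=.
exact: T_span.
Qed.

End Forward.

Lemma complex_fwd (R : realType) (X : topologicalLmodType R[i]) (T : {linear X -> X}) x :
  spanS (EigC T) x -> finite_dim (spanS (range (fun n => iter n T x))).
Proof.
move=> [m [c [v [hv ex]]]].
have [S0 [SD SZ]] := spanS_subspace (range v).
apply: (@fd_of_inv _ _ T m v).
  move=> i; have [_ [l [_ hl]]] := hv i; rewrite hl.
  by apply: SZ; apply: spanS_in; exists i.
rewrite ex; apply: subspace_sum; first exact: spanS_subspace.
by move=> i _; apply: SZ; apply: spanS_in; exists i.
Qed.

Lemma real_fwd (R : realType) (X : topologicalLmodType R) (T : {linear X -> X}) x :
  spanS (EigR T) x -> finite_dim (spanS (range (fun n => iter n T x))).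
Proof.
move=> [m [c [v [hv ex]]]].
have [yf hy] := choice (fun i => match hv i with
  ex_intro y h => ex_intro (fun y => exists a b : R, a ^+ 2 + b ^+ 2 = 1 /\
      (v i != 0 \/ y != 0) /\ T (v i) = a *: v i - b *: y /\ T y = a *: y + b *: v i) y h end).
pose u := fun k : 'I_(m + m) => match fintype.split k with inl i => v i | inr i => yf i end.
have u1 : forall i, u (lshift m i) = v i.
  by move=> i; rewrite /u -[lshift _ _]/(unsplit (inl i)) unsplitK.
have u2 : forall i, u (rshift m i) = yf i.
  by move=> i; rewrite /u -[rshift _ _]/(unsplit (inr i)) unsplitK.
have [S0 [SD SZ]] := spanS_subspace (range u).
have inv : forall i, spanS (range u) (v i).
  by move=> i; apply: spanS_in; exists (lshift m i).
have iny : forall i, spanS (range u) (yf i).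
  by move=> i; apply: spanS_in; exists (rshift m i).
apply: (@fd_of_inv _ _ T (m + m) u).
  move=> k; rewrite /u; case: (fintype.split k) => i;
    have [a [b [_ [_ [h1 h2]]]]] := hy i.
    rewrite h1; apply: SD; first by apply: SZ.
    by rewrite -scaleNr; apply: SZ.
  rewrite h2; apply: SD; by apply: SZ.
rewrite ex; apply: subspace_sum; first exact: spanS_subspace.
by move=> i _; apply: SZ.
Qed.

Lemma iter_opN (X : topologicalType) N (f : X -> X) n (z : {ptws 'I_N -> X}) i :
  iter n (opN N f) z i = iter n f (z i).
Proof. by elim: n => [|n IH] //=; rewrite /opN IH. Qed.

Lemma part2 (K : numFieldType) (X : topologicalLmodType K) (T : {linear X -> X})
  (Tc : continuous T) (E : set X) :
  (forall x, recurrent T x ->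
     (spanS E x <-> finite_dim (spanS (range (fun n => iter n T x))))) ->
  forall F : set (set nat), furstenberg F ->
     FRec F T `\` spanS E !=set0 ->
     exists Z : set X, Defs.subspace Z /\ T @` Z `<=` Z /\ ~ finite_dim Z /\
       forall N : nat, (0 < N)%N ->
         [set z : {ptws 'I_N -> X} | forall i, Z (z i)] `<=` FRec F (opN N T).
Proof.
move=> part1 F hF [y [hy nyE]].
have hrec := FRec_recurrent hF hy.
pose Z := [set z | exists q : {poly K}, z = papply T q y].
have hZ : Defs.subspace Z.
  split; first by exists 0; rewrite papply0.
  split.
    by move=> a b [q1 ->] [q2 ->]; exists (q1 + q2); rewrite papplyD.
  by move=> a b [q ->]; exists (a *: q); rewrite papplyZ.
exists Z; split => //; split.
  by move=> _ [z [q ->] <-]; exists ('X * q); rewrite papplyXM.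
split.
  move=> [m [v hv]]; apply: nyE; apply/(part1 y hrec).
  exists m, v; apply: subset_trans hv.
  apply: spanS_sub => // _ [n _ <-].
  by exists ('X^n * 1); rewrite papplyXnM papply1.
move=> N N0 z hz.
have [qf hq] := choice (fun i => hz i).
pose Phi := fun y' : X => ((fun i => papply T (qf i) y') : {ptws 'I_N -> X}).
have Phiy : Phi y = z by apply: funext => i; rewrite /Phi hq.
have hPhi : Phi @ nbhs y --> z.
  rewrite -Phiy; apply: ptws_cvg => i.
  by apply: papply_cvg => //; exact: cvg_id.
move=> U hU.
have hU' := hPhi U hU.
have := hy _ hU'.
case: hF => _ [Fup _] hFy.
apply: (Fup _ _ hFy) => n /= hn.
have -> : iter n (opN N T) z = Phi (iter n T y).
  apply: funext => i; rewrite iter_opN /Phi hq papply_iter //.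
exact: hn.
Qed.

Theorem mainTheorem15 :
  (* real F-spaces *)
  (forall (R : realType) (X : topologicalLmodType R) (T : {linear X -> X}),
      continuous T -> Fspace R X -> separable X -> ~ finite_dim [set: X] ->
      thm15_conclusion T (EigR T)) /\
  (* complex F-spaces *)
  (forall (R : realType) (X : topologicalLmodType R[i]) (T : {linear X -> X}),
      continuous T -> Fspace R X -> separable X -> ~ finite_dim [set: X] ->
      thm15_conclusion T (EigC T)).
Proof.
split.
- move=> R X T Tc hF _ _.
  have p1 : forall x, recurrent T x ->
      (spanS (EigR T) x <-> finite_dim (spanS (range (fun n => iter n T x)))).
    move=> x hrec; split; first exact: real_fwd.
    exact: (real_conv Tc hF hrec).
  split; first exact: p1.
  exact: (part2 Tc p1).
- move=> R X T Tc hF _ _.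
  have p1 : forall x, recurrent T x ->
      (spanS (EigC T) x <-> finite_dim (spanS (range (fun n => iter n T x)))).
    move=> x hrec; split; first exact: complex_fwd.
    exact: (complex_conv Tc hF hrec).
  split; first exact: p1.
  exact: (part2 Tc p1).
Qed.
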